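(* Let $(X,d_X)$, $(Y,d_Y)$ and $(X\times Y,d)$ be ultrametric spaces, where $d$ is partial distance-preserving and $d_\infty\le d$ on $(X\times Y)\times(X\times Y)$. Then for all compact sets $W\subseteq X$, $Z\subseteq Y$ and every $\varepsilon>0$, $$\mathcal M_\varepsilon(W\times Z)=\mathcal M_\varepsilon(W)\cdot\mathcal M_\varepsilon(Z),\qquad \mathcal N_\varepsilon(W\times Z)=\mathcal N_\varepsilon(W)\cdot\mathcal N_\varepsilon(Z),\qquad \mathcal M_\varepsilon(W\times Z)=\mathcal N_\varepsilon(W\times Z),$$ where the quantities for $W$, $Z$, $W\times Z$ are computed in $(X,d_X)$, $(Y,d_Y)$, $(X\times Y,d)$ respectively.
   Context: $d_\infty((x_1,y_1),(x_2,y_2))=\max\{d_X(x_1,x_2),d_Y(y_1,y_2)\}$. A metric $d$ on $X\times Y$ is partial distance-preserving if $d((x_1,y),(x_2,y))=d_X(x_1,x_2)$ and $d((x,y_1),(x,y_2))=d_Y(y_1,y_2)$ for all $x,x_1,x_2\in X$, $y,y_1,y_2\in Y$. Ultrametric: $\rho(a,b)\le\max\{\rho(a,c),\rho(c,b)\}$. In a metric space $(M,\rho)$ with closed balls $B(c,r)=\{x:\rho(x,c)\le r\}$: $C$ is an $\varepsilon$-net for $V$ if $V\subseteq\bigcup_{c\in C}B(c,\varepsilon)$; $A$ is $\varepsilon$-distinguishable if $\rho(a,b)>\varepsilon$ for distinct $a,b\in A$. For totally bounded $V$, the covering number $\mathcal N_\varepsilon(V)$ is the smallest cardinality of a subset of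 $V$ that is an $\varepsilon$-net for $V$, and the packing number $\mathcal M_\varepsilon(V)$ is the maximal cardinality of an $\varepsilon$-distinguishable subset of $V$. *)

(* Defs.v *)
From Stdlib Require Import Reals List.
Import ListNotations.
Open Scope R_scope.

Set Implicit Arguments.

Definition is_metric (T : Type) (d : T -> T -> R) : Prop :=
  (forall x y, 0 <= d x y) /\
  (forall x y, d x y = 0 <-> x = y) /\
  (forall x y, d x y = d y x) /\
  (forall x y z, d x z <= d x y + d y z).

Definition is_ultrametric (T : Type) (d : T -> T -> R) : Prop :=
  is_metric d /\ (forall a b c, d a b <= Rmax (d a c) (d c b)).

Definition cball (T : Type) (d : T -> T -> R) (c : T) (r : R) : T -> Prop :=
  fun x => d x c <= r.

Definition is_open (T : Type) (d : T -> T -> R) (U : T -> Prop) : Prop :=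
  forall x, U x -> exists r, 0 < r /\ forall y, d x y < r -> U y.

Definition is_compact (T : Type) (d : T -> T -> R) (V : T -> Prop) : Prop :=
  forall (I : Type) (U : I -> T -> Prop),
    (forall i, is_open d (U i)) ->
    (forall x, V x -> exists i, U i x) ->
    exists l : list I, forall x, V x -> exists i, In i l /\ U i x.

Definition fin_subset (T : Type) (V : T -> Prop) (C : list T) : Prop :=
  NoDup C /\ (forall c, In c C -> V c).

Definition is_net (T : Type) (d : T -> T -> R) (eps : R) (V : T -> Prop)
  (C : list T) : Prop :=
  forall x, V x -> exists c, In c C /\ cball d c eps x.

Definition distinguishable (T : Type) (d : T -> T -> R) (eps : R)
  (A : list T) : Prop :=
  forall a b, In a A -> In b A -> a <> b -> eps < d a b.

(* n is the covering number N_eps(V): the smallest cardinality of a subset of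
   V that is an eps-net for V (a minimum is attained by a finite subset, so it
   suffices to compare with finite subsets). *)
Definition is_covering_number (T : Type) (d : T -> T -> R) (eps : R)
  (V : T -> Prop) (n : nat) : Prop :=
  (exists C, fin_subset V C /\ is_net d eps V C /\ length C = n) /\
  (forall C, fin_subset V C -> is_net d eps V C -> (n <= length C)%nat).

(* n is the packing number M_eps(V): the maximal cardinality of an
   eps-distinguishable subset of V (every finite such subset has at most n
   elements, hence no infinite one exists). *)
Definition is_packing_number (T : Type) (d : T -> T -> R) (eps : R)
  (V : T -> Prop) (n : nat) : Prop :=
  (exists A, fin_subset V A /\ distinguishable d eps A /\ length A = n) /\
  (forall A, fin_subset V A -> distinguishable d eps A -> (length A <= n)%nat).

Definition setX (X Y : Type) (W : X -> Prop) (Z : Y -> Prop) : X * Y -> Prop :=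
  fun p => W (fst p) /\ Z (snd p).

Definition partial_distance_preserving (X Y : Type) (dX : X -> X -> R)
  (dY : Y -> Y -> R) (d : X * Y -> X * Y -> R) : Prop :=
  (forall x1 x2 y, d (x1, y) (x2, y) = dX x1 x2) /\
  (forall x y1 y2, d (x, y1) (x, y2) = dY y1 y2).

Definition d_inf (X Y : Type) (dX : X -> X -> R) (dY : Y -> Y -> R)
  (p q : X * Y) : R :=
  Rmax (dX (fst p) (fst q)) (dY (snd p) (snd q)).

(* Main.v *)
Require Import Defs.
From Stdlib Require Import Reals List Lra Lia Classical.
Import ListNotations.
Open Scope R_scope.

Section U.
Variable T : Type.
Variable d : T -> T -> R.
Hypothesis hu : is_ultrametric d.

Lemma u_sym a b : d a b = d b a.
Proof. destruct hu as [[_ [_ [h _]]] _]. apply h. Qed.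

Lemma u_refl a : d a a = 0.
Proof. destruct hu as [[_ [h _]] _]. apply h. reflexivity. Qed.

Lemma u_le eps a b c : d a c <= eps -> d c b <= eps -> d a b <= eps.
Proof.
  intros h1 h2. destruct hu as [_ h]. eapply Rle_trans. apply (h a b c).
  apply Rmax_lub; assumption.
Qed.

Lemma u_eq eps (A : list T) a b : distinguishable d eps A -> In a A -> In b A ->
  d a b <= eps -> a = b.
Proof.
  intros hA ha hb h. apply NNPP; intro hne. specialize (hA a b ha hb hne). lra.
Qed.
End U.
Arguments u_sym {T d} hu a b.
Arguments u_refl {T d} hu a.
Arguments u_le {T d} hu eps a b c.
Arguments u_eq {T d} eps A a b.

Lemma inj_len {A B : Type} (Rl : A -> B -> Prop) (l : list A) : forall (m : list B),
  NoDup l -> (forall a, In a l -> exists b, In b m /\ Rl a b) ->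
  (forall a a' b, In a l -> In a' l -> Rl a b -> Rl a' b -> a = a') ->
  (length l <= length m)%nat.
Proof.
  induction l as [|a l IH]; intros m hnd hex hinj; simpl. lia.
  inversion hnd; subst.
  destruct (hex a (or_introl eq_refl)) as [b [hb hab]].
  destruct (in_split _ _ hb) as [l1 [l2 ->]].
  assert (length l <= length (l1 ++ l2))%nat.
  { apply IH; auto.
    - intros a' ha'. destruct (hex a' (or_intror ha')) as [b' [hb' hab']].
      exists b'. split; auto.
      apply in_app_or in hb'. destruct hb' as [h|[h|h]]; try (apply in_or_app; auto).
      subst b'. exfalso. assert (a = a') by (apply (hinj a a' b); simpl; auto).
      subst; contradiction.
    - intros; eapply hinj; simpl; eauto. }
  rewrite !length_app in *. simpl. lia.
Qed.

Section N.
Variable T : Type.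
Variable d : T -> T -> R.
Hypothesis hu : is_ultrametric d.
Variable eps : R.
Hypothesis heps : 0 < eps.

Lemma good_numbers (V : T -> Prop) (C : list T) :
  fin_subset V C -> is_net d eps V C -> distinguishable d eps C ->
  is_packing_number d eps V (length C) /\ is_covering_number d eps V (length C).
Proof.
  intros hf hn hdis. split; split.
  - exists C; auto.
  - intros A [hnd hAV] hA. apply (inj_len (fun a c => d a c <= eps)).
    + exact hnd.
    + intros a ha. apply hn. auto.
    + intros a a' c ha ha' h1 h2. apply (u_eq eps A a a' hA ha ha').
    eapply (u_le hu); eauto. rewrite (u_sym hu). auto.
  - exists C; auto.
  - intros C' [hnd hCV] hn'. apply (inj_len (fun c c' => d c c' <= eps)).
    + destruct hf; auto.
    + intros a ha. apply hn'. apply hf; auto.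
    + intros a a' c ha ha' h1 h2. apply (u_eq eps C a a' hdis ha ha').
      eapply (u_le hu); eauto. rewrite (u_sym hu). auto.
Qed.

Lemma extract (L : list T) : exists C,
  (forall c, In c C -> In c L) /\ NoDup C /\ distinguishable d eps C /\
  (forall x, In x L -> exists c, In c C /\ d x c <= eps).
Proof.
  induction L as [|a L IH].
  - exists []. split; [simpl; tauto|split; [apply NoDup_nil|split; [intros a b []|simpl; tauto]]].
  - destruct IH as [C [h1 [h2 [h3 h4]]]].
    destruct (classic (exists c, In c C /\ d a c <= eps)) as [[c [hc hac]]|hno].
    + exists C. split; [|split; [|split]]; auto.
      * intros; simpl; auto.
      * intros x [->|hx]; eauto.
    + exists (a :: C). split; [|split; [|split]].
      * intros c [->|hc]; simpl; auto.
      * apply NoDup_cons; [|exact h2]. intro hin. apply hno. exists a. split; auto.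
        rewrite (u_refl hu). lra.
      * intros x y [->|hx] [->|hy] hne.
        -- congruence.
        -- destruct (Rlt_or_le eps (d x y)) as [h|h]; auto.
           exfalso; apply hno; eauto.
        -- destruct (Rlt_or_le eps (d x y)) as [h|h]; auto.
           exfalso; apply hno; exists x; split; auto. rewrite (u_sym hu); auto.
        -- auto.
      * intros x [->|hx].
        -- exists x; split; simpl; auto. rewrite (u_refl hu); lra.
        -- destruct (h4 x hx) as [c [hc hxc]]; exists c; simpl; auto.
Qed.

Lemma compact_good (V : T -> Prop) : is_compact d V ->
  exists C, fin_subset V C /\ is_net d eps V C /\ distinguishable d eps C.
Proof.
  intros hc.
  destruct (hc {x | V x} (fun i y => d y (proj1_sig i) <= eps)) as [l hl].
  - intros i y hy. exists eps. split; auto. intros z hz.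
    eapply (u_le hu). 2: exact hy. rewrite (u_sym hu); lra.
  - intros x hx. exists (exist _ x hx). simpl. rewrite (u_refl hu); lra.
  - destruct (extract (map (@proj1_sig _ _) l)) as [C [h1 [h2 [h3 h4]]]].
    exists C. repeat split; auto.
    + intros c hcC. apply h1 in hcC. apply in_map_iff in hcC.
      destruct hcC as [[x hx] [<- _]]; auto.
    + intros x hx. destruct (hl x hx) as [[y hy] [hin hxy]]; simpl in hxy.
      destruct (h4 y) as [c [hcC hyc]].
      { apply in_map_iff. exists (exist _ y hy); auto. }
      exists c. split; auto. unfold cball. eapply (u_le hu); eauto.
Qed.
End N.

Lemma NoDup_prod {A B : Type} (l : list A) (m : list B) :
  NoDup l -> NoDup m -> NoDup (list_prod l m).
Proof.
  intros hl hm. induction hl as [|a l hna hl IH]; simpl. constructor.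
  apply NoDup_app; auto.
  - apply NoDup_map_NoDup_ForallPairs; auto.
    intros x y _ _ h. inversion h; auto.
  - intros p hp hp'. apply in_map_iff in hp. destruct hp as [b [<- _]].
    apply in_prod_iff in hp'. tauto.
Qed.


Theorem lemma4p2 (X Y : Type) (dX : X -> X -> R) (dY : Y -> Y -> R)
  (d : X * Y -> X * Y -> R)
  (hX : is_ultrametric dX) (hY : is_ultrametric dY) (hd : is_ultrametric d)
  (hpdp : partial_distance_preserving dX dY d)
  (hinf : forall p q, d_inf dX dY p q <= d p q)
  (W : X -> Prop) (Z : Y -> Prop)
  (hW : is_compact dX W) (hZ : is_compact dY Z)
  (eps : R) (heps : 0 < eps) :
  exists mW mZ nW nZ : nat,
    is_packing_number dX eps W mW /\ is_packing_number dY eps Z mZ /\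
    is_covering_number dX eps W nW /\ is_covering_number dY eps Z nZ /\
    is_packing_number d eps (setX W Z) (mW * mZ) /\
    is_covering_number d eps (setX W Z) (nW * nZ) /\
    (mW * mZ = nW * nZ)%nat.
Proof.
  destruct (compact_good _ _ hX eps heps W hW) as [CW [fW [nW dW]]].
  destruct (compact_good _ _ hY eps heps Z hZ) as [CZ [fZ [nZ dZ]]].
  destruct (good_numbers _ _ hX eps W CW fW nW dW) as [pW cW].
  destruct (good_numbers _ _ hY eps Z CZ fZ nZ dZ) as [pZ cZ].
  assert (hf : fin_subset (setX W Z) (list_prod CW CZ)).
  { split. apply NoDup_prod; [apply fW|apply fZ].
    intros [x y] h. apply in_prod_iff in h. split; [apply fW|apply fZ]; tauto. }
  assert (hn : is_net d eps (setX W Z) (list_prod CW CZ)).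
  { intros [x y] [hx hy]. simpl in *.
    destruct (nW x hx) as [cx [hcx hdx]]. destruct (nZ y hy) as [cy [hcy hdy]].
    exists (cx, cy). split. apply in_prod; auto.
    unfold cball in *. apply (u_le hd eps _ _ (cx, y)).
    - destruct hpdp as [h1 _]. rewrite h1. auto.
    - destruct hpdp as [_ h2]. rewrite h2. auto. }
  assert (hdis : distinguishable d eps (list_prod CW CZ)).
  { intros [a1 b1] [a2 b2] h1 h2 hne.
    apply in_prod_iff in h1. apply in_prod_iff in h2.
    eapply Rlt_le_trans. 2: apply hinf. unfold d_inf; simpl.
    destruct (classic (a1 = a2)) as [->|ha].
    - assert (b1 <> b2) by congruence.
      eapply Rlt_le_trans. apply (dZ b1 b2); tauto. apply Rmax_r.
    - eapply Rlt_le_trans. apply (dW a1 a2); tauto. apply Rmax_l. }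
  destruct (good_numbers _ _ hd eps _ _ hf hn hdis) as [p c].
  rewrite length_prod in p, c.
  exists (length CW), (length CZ), (length CW), (length CZ).
  repeat split; auto; try apply pW; try apply pZ; try apply cW; try apply cZ;
    try apply p; try apply c.
Qed.
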